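(* Let $\gamma_X=(X,d_X(\cdot))$ and $\gamma_Y=(Y,d_Y(\cdot))$ be any two dynamic metric spaces. Then \[\mathbf{d}_{\mathrm{I}}^{\mathbf{Sets}}(\theta(\gamma_X),\theta(\gamma_Y))\le 2\cdot d_{\mathtt{dyn}}(\gamma_X,\gamma_Y).\]
   Context: A dynamic metric space (DMS) is a pair $\gamma_X=(X,d_X(\cdot))$ where $X$ is a nonempty finite set and $d_X(\cdot):\mathbf{R}\times X\times X\to\mathbf{R}_+$ satisfies: each $d_X(t)$ is a pseudometric, some $d_X(t_0)$ is a metric, and $t\mapsto d_X(t)(x,x')$ is continuous for all $x,x'$. $\mathbf{Int}$ is the set of finite closed intervals of $\mathbf{R}$; $(\bigvee_I d_X)(x,x'):=\min_{s\in I}d_X(s)(x,x')$; for $I=[u,u']$, $I^\varepsilon=[u-\varepsilon,u'+\varepsilon]$; $[t]^\varepsilon=[t-\varepsilon,t+\varepsilon]$. A tripod between $X$ and $Y$ is a set $Z$ with surjections $\varphi_X:Z\to X$, $\varphi_Y:Z\to Y$; it is an $\varepsilon$-tripod between $\gamma_X,\gamma_Y$ if for all $t\in\mathbf{R}$, $z,z'\in Z$: $(\bigvee_{[t]^\varepsilon}d_X)(\varphi_X(z),\varphi_X(z'))\le d_Y(t)(\varphi_Y(z),\varphi_Y(z'))+2\varepsilon$ and $(\bigvee_{[t]^\varepsilon}d_Y)(\varphi_Y(z),\varphi_Y(z'))\le d_X(t)(\varphi_X(z),\varphi_X(z'))+2\varepsilon$. $d_{\mathtt{dyn}}(\gamma_X,\gamma_Y)$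 is the minimum over tripods of the infimum of $\varepsilon$ for which the tripod is an $\varepsilon$-tripod ($\infty$ if none). Order $\mathbf{Int}\times\mathbf{R}_+$ by $(I,\delta)\le(J,\delta')$ iff $I\subseteq J$, $\delta\le\delta'$. For $(I,\delta)$, let $\sim^I_{X,\delta}$ be the equivalence relation on $X$: $x\sim x'$ iff there are $x=x_0,\dots,x_n=x'$ with $(\bigvee_I d_X)(x_i,x_{i+1})\le\delta$. The spatiotemporal SLHC dendrogram $\theta(\gamma_X):\mathbf{Int}\times\mathbf{R}_+\to\mathbf{Sets}$ sends $(I,\delta)$ to the partition $X/\sim^I_{X,\delta}$ and $(I,\delta)\le(J,\delta')$ to the natural map sending each block to the block of $X/\sim^J_{X,\delta'}$ containing it. For functors $F,G:\mathbf{Int}\times\mathbf{R}_+\to\mathbf{Sets}$, an $\varepsilon$-interleaving consists of natural families of maps $f_{(I,\delta)}:F_{(I,\delta)}\to G_{(I^\varepsilon,\delta+\varepsilon)}$, $g_{(I,\delta)}:G_{(I,\delta)}\to F_{(I^\varepsilon,\delta+\varepsilon)}$ with $g_{(I^\varepsilon,\delta+\varepsilon)}\circ f_{(I,\delta)}=F((I,\delta)\le(I^{2\varepsilon},\delta+2\varepsilon))$ and $f_{(I^\varepsilon,\delta+\varepsilon)}\circ g_{(I,\delta)}=G((I,\delta)\le(I^{2\varepsilon},\delta+2\varepsilon))$. $\mathbf{d}_{\mathrm{I}}^{\mathbf{Sets}}(F,G)$ is the infimum of $\varepsilon$ admitting such an interleaving with all $f_{(I,\delta)},g_{(I,\delta)}$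 surjective ($\infty$ if none). *)

(* Defs.v *)
From HB Require Import structures.
From mathcomp Require Import all_boot all_order all_algebra.
From mathcomp Require Import all_classical all_reals all_analysis.
From Stdlib Require Import Relations.Relation_Operators.
Set Implicit Arguments. Unset Strict Implicit. Unset Printing Implicit Defensive.
Import Order.TTheory GRing.Theory Num.Theory.
Import numFieldNormedType.Exports.
Local Open Scope classical_set_scope.
Local Open Scope ring_scope.

Definition is_pseudometric (R : realType) (X : Type) (d : X -> X -> R) :=
  [/\ forall x x', 0 <= d x x',
      forall x, d x x = 0,
      forall x x', d x x' = d x' x &
      forall x x' x'', d x x'' <= d x x' + d x' x''].

Definition is_metric (R : realType) (X : Type) (d : X -> X -> R) :=
  is_pseudometric d /\ forall x x', d x x' = 0 -> x = x'.

Record dms (R : realType) (X : finType) := DMS {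
  dist : R -> X -> X -> R;
  dms_nonempty : exists x : X, True;
  dms_pseudo : forall t, is_pseudometric (dist t);
  dms_metric : exists t0, is_metric (dist t0);
  dms_cont : forall x x', continuous (fun t => dist t x x')
}.

(* Finite closed intervals [u, u'] are encoded by pairs (u, u') with u <= u'. *)
Definition is_itv (R : realType) (I : R * R) := I.1 <= I.2.
Definition itv_set (R : realType) (I : R * R) : set R := [set s | I.1 <= s <= I.2].
Definition itv_sub (R : realType) (I J : R * R) := J.1 <= I.1 /\ I.2 <= J.2.
Definition itv_thick (R : realType) (I : R * R) (e : R) : R * R := (I.1 - e, I.2 + e).
Definition pt_thick (R : realType) (t e : R) : R * R := (t - e, t + e).

(* (\/_I d_X)(x,x') = min_{s in I} d_X(s)(x,x') (the infimum is attained by continuity) *)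
Definition vee (R : realType) (X : finType) (g : dms R X) (I : R * R) (x x' : X) : R :=
  inf [set dist g s x x' | s in itv_set I].

Definition surj (A B : Type) (h : A -> B) := forall b, exists a, h a = b.

Definition eps_tripod (R : realType) (X Y : finType) (gX : dms R X) (gY : dms R Y)
  (Z : Type) (phX : Z -> X) (phY : Z -> Y) (e : R) :=
  forall (t : R) (z z' : Z),
    vee gX (pt_thick t e) (phX z) (phX z') <= dist gY t (phY z) (phY z') + 2 * e /\
    vee gY (pt_thick t e) (phY z) (phY z') <= dist gX t (phX z) (phX z') + 2 * e.

(* min over tripods of inf of eps = inf over all (tripod, eps) pairs; +oo if none *)
Definition d_dyn (R : realType) (X Y : finType) (gX : dms R X) (gY : dms R Y) : \bar R :=
  ereal_inf [set (e%:E) | e in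
    [set e : R | 0 <= e /\ exists (Z : Type) (phX : Z -> X) (phY : Z -> Y),
        [/\ surj phX, surj phY & eps_tripod gX gY phX phY e]]].

(* A functor F : Int x R_+ -> Sets is presented by a carrier type, the set F_(I,delta)
   (a subset of the carrier) for each object, and the transition maps
   F((I,delta) <= (J,delta')) as functions on the carrier (only their behaviour on
   F_(I,delta) matters). *)
Record pfunctor (R : realType) := PFunctor {
  pf_T : Type;
  pf_obj : R * R -> R -> set pf_T;
  pf_map : R * R -> R -> R * R -> R -> pf_T -> pf_T
}.

Arguments pf_T {R} _.
Arguments pf_obj {R} _ _ _ _.
Arguments pf_map {R} _ _ _ _ _ _.

Definition obj_ok (R : realType) (I : R * R) (d : R) := is_itv I /\ 0 <= d.
Definition obj_le (R : realType) (I : R * R) (d : R) (J : R * R) (d' : R) :=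
  itv_sub I J /\ d <= d'.

Definition surj_interleaving (R : realType) (F G : pfunctor R) (e : R) :=
  exists (f : R * R -> R -> pf_T F -> pf_T G) (g : R * R -> R -> pf_T G -> pf_T F),
  [/\
   forall I d, obj_ok I d ->
     (forall b, pf_obj F I d b -> pf_obj G (itv_thick I e) (d + e) (f I d b)) /\
     (forall c, pf_obj G (itv_thick I e) (d + e) c ->
        exists2 b, pf_obj F I d b & f I d b = c),
   forall I d, obj_ok I d ->
     (forall c, pf_obj G I d c -> pf_obj F (itv_thick I e) (d + e) (g I d c)) /\
     (forall b, pf_obj F (itv_thick I e) (d + e) b ->
        exists2 c, pf_obj G I d c & g I d c = b),
   forall I d J d', obj_ok I d -> obj_ok J d' -> obj_le I d J d' ->
     (forall b, pf_obj F I d b ->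
        pf_map G (itv_thick I e) (d + e) (itv_thick J e) (d' + e) (f I d b)
        = f J d' (pf_map F I d J d' b)) /\
     (forall c, pf_obj G I d c ->
        pf_map F (itv_thick I e) (d + e) (itv_thick J e) (d' + e) (g I d c)
        = g J d' (pf_map G I d J d' c)),
   forall I d, obj_ok I d -> forall b, pf_obj F I d b ->
     g (itv_thick I e) (d + e) (f I d b) = pf_map F I d (itv_thick I (2 * e)) (d + 2 * e) b &
   forall I d, obj_ok I d -> forall c, pf_obj G I d c ->
     f (itv_thick I e) (d + e) (g I d c) = pf_map G I d (itv_thick I (2 * e)) (d + 2 * e) c].

Definition dI_sets (R : realType) (F G : pfunctor R) : \bar R :=
  ereal_inf [set (e%:E) | e in [set e : R | 0 <= e /\ surj_interleaving F G e]].

Definition slhc_rel (R : realType) (X : finType) (g : dms R X) (I : R * R) (d : R) : X -> X -> Prop :=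
  clos_refl_trans X (fun a b => vee g I a b <= d).

Definition slhc_block (R : realType) (X : finType) (g : dms R X) (I : R * R) (d : R) (x : X) : set X :=
  [set y | slhc_rel g I d x y].

(* theta(gamma_X): (I,d) |-> X / ~^I_{X,d} (set of blocks); transition maps send a block
   to the block of the larger parameter containing it. *)
Definition theta (R : realType) (X : finType) (g : dms R X) : pfunctor R :=
  @PFunctor R (set X)
    (fun I d => [set B | exists x : X, B = slhc_block g I d x])
    (fun I d J d' B => [set y | exists2 x, B x & slhc_rel g J d' x y]).

(* Main.v *)
Require Import Defs.
From HB Require Import structures.
From mathcomp Require Import all_boot all_order all_algebra.
From mathcomp Require Import all_classical all_reals all_analysis.
From mathcomp Require Import lra.
From Stdlib Require Import Relations.Relation_Operators.
Set Implicit Arguments. Unset Strict Implicit. Unset Printing Implicit Defensive.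
Import Order.TTheory GRing.Theory Num.Theory.
Import numFieldNormedType.Exports.
Local Open Scope classical_set_scope.
Local Open Scope ring_scope.

Lemma dist_ge0 (R : realType) (A : finType) (g : dms R A) s x y : 0 <= dist g s x y.
Proof. by case: (dms_pseudo g s). Qed.

Lemma dist_refl (R : realType) (A : finType) (g : dms R A) s x : dist g s x x = 0.
Proof. by case: (dms_pseudo g s). Qed.

Lemma vee_lb (R : realType) (A : finType) (g : dms R A) I s x y :
  I.1 <= s <= I.2 -> vee g I x y <= dist g s x y.
Proof.
move=> Hs; apply: ge_inf; last by exists s.
by exists 0 => _ [r _ <-]; apply: dist_ge0.
Qed.

Lemma vee_approx (R : realType) (A : finType) (g : dms R A) I x y eta :
  is_itv I -> 0 < eta ->
  exists2 s, I.1 <= s <= I.2 & dist g s x y < vee g I x y + eta.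
Proof.
move=> HI he.
have hinf : has_inf [set dist g s x y | s in itv_set I].
  split; first by exists (dist g I.1 x y); exists I.1 => //; rewrite /itv_set /= lexx; exact: HI.
  by exists 0 => _ [r _ <-]; apply: dist_ge0.
have [r [s Hs <-] Hr] := inf_adherent he hinf.
by exists s.
Qed.

Lemma vee_mono (R : realType) (A : finType) (g : dms R A) I J x y :
  is_itv I -> itv_sub I J -> vee g J x y <= vee g I x y.
Proof.
move=> HI [H1 H2]; apply/ler_addgt0Pr => eta he.
have [s /andP[Hs1 Hs2] Hd] := vee_approx g x y HI he.
have := @vee_lb R A g J s x y.
have -> : J.1 <= s <= J.2 by apply/andP; split; lra.
move=> /(_ isT) Hl; lra.
Qed.

Lemma rel_mono (R : realType) (A : finType) (g : dms R A) I d J d' x y :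
  is_itv I -> itv_sub I J -> d <= d' -> slhc_rel g I d x y -> slhc_rel g J d' x y.
Proof.
move=> HI HIJ Hd; elim=> [a b Hab| a | a b c _ IH1 _ IH2].
- by apply: rt_step; have := vee_mono g a b HI HIJ; lra.
- exact: rt_refl.
- exact: rt_trans IH1 IH2.
Qed.

Lemma map_block (R : realType) (A : finType) (g : dms R A) I d J d' x :
  is_itv I -> itv_sub I J -> d <= d' ->
  pf_map (theta g) I d J d' (slhc_block g I d x) = slhc_block g J d' x.
Proof.
move=> HI HIJ Hd; apply/seteqP; split => y /=.
- case=> x' Hx' Hy; apply: rt_trans Hy; exact: rel_mono Hx'.
- by move=> Hy; exists x => //; apply: rt_refl.
Qed.

Definition tmap (R : realType) (A B : finType) (gB : dms R B) (Z : Type)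
  (phA : Z -> A) (phB : Z -> B) (e : R) (I : R * R) (d : R) (S : set A) : set B :=
  [set b | exists z, S (phA z) /\ slhc_rel gB (itv_thick I e) (d + e) (phB z) b].

Definition half_tripod (R : realType) (A B : finType) (gA : dms R A) (gB : dms R B)
  (Z : Type) (phA : Z -> A) (phB : Z -> B) (e : R) :=
  forall (t : R) (z z' : Z),
    vee gB (pt_thick t e) (phB z) (phB z') <= dist gA t (phA z) (phA z') + 2 * e.

Lemma transfer (R : realType) (A B : finType) (gA : dms R A) (gB : dms R B)
  (Z : Type) (phA : Z -> A) (phB : Z -> B) (e : R) I d :
  Defs.surj phA -> half_tripod gA gB phA phB e -> 0 <= e -> is_itv I -> 0 <= d ->
  forall a a', slhc_rel gA I d a a' -> forall z z', phA z = a -> phA z' = a' ->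
  slhc_rel gB (itv_thick I (2 * e)) (d + 2 * e) (phB z) (phB z').
Proof.
move=> sA H he HI hd a a'.
have key : forall z z', vee gA I (phA z) (phA z') <= d ->
    vee gB (itv_thick I (2 * e)) (phB z) (phB z') <= d + 2 * e.
  move=> z z' Hv; apply/ler_addgt0Pr => eta heta.
  have [s /andP[Hs1 Hs2] Hd] := vee_approx gA (phA z) (phA z') HI heta.
  have Ht := H s z z'.
  have Hm : vee gB (itv_thick I (2 * e)) (phB z) (phB z') <=
            vee gB (pt_thick s e) (phB z) (phB z').
    apply: vee_mono; rewrite /is_itv /itv_sub /=; first lra.
    split; lra.
  lra.
elim=> [x y Hxy | x | x y w _ IH1 _ IH2] z z' Hz Hz'.
- by apply: rt_step; apply: key; rewrite Hz Hz'.
- apply: rt_step; apply: key; rewrite Hz Hz'.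
  apply: le_trans (vee_lb _ _ _ (_ : I.1 <= I.1 <= I.2)) _.
    by rewrite lexx; exact: HI.
  by rewrite dist_refl.
- have [z'' Hz''] := sA y.
  exact: rt_trans (IH1 z z'' Hz Hz'') (IH2 z'' z' Hz'' Hz').
Qed.

Lemma tmap_block (R : realType) (A B : finType) (gA : dms R A) (gB : dms R B)
  (Z : Type) (phA : Z -> A) (phB : Z -> B) (e : R) I d a z0 :
  Defs.surj phA -> half_tripod gA gB phA phB e -> 0 <= e -> obj_ok I d ->
  phA z0 = a ->
  tmap gB phA phB (2 * e) I d (slhc_block gA I d a) =
  slhc_block gB (itv_thick I (2 * e)) (d + 2 * e) (phB z0).
Proof.
move=> sA H he [HI hd] Hz0; apply/seteqP; split => b /=.
- case=> z [Hz Hb]; apply: rt_trans Hb.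
  exact: (transfer sA H he HI hd Hz Hz0).
- move=> Hb; exists z0; split => //; rewrite Hz0; exact: rt_refl.
Qed.

Lemma thick_ok (R : realType) I (d E : R) : 0 <= E -> obj_ok I d -> obj_ok (itv_thick I E) (d + E).
Proof. by move=> hE [HI hd]; rewrite /obj_ok /is_itv /=; move: HI; rewrite /is_itv => HI; split; lra. Qed.

Lemma half_obj (R : realType) (A B : finType) (gA : dms R A) (gB : dms R B)
  (Z : Type) (phA : Z -> A) (phB : Z -> B) (e : R) :
  Defs.surj phA -> Defs.surj phB -> half_tripod gA gB phA phB e -> 0 <= e ->
  forall I d, obj_ok I d ->
     (forall b, pf_obj (theta gA) I d b ->
        pf_obj (theta gB) (itv_thick I (2 * e)) (d + 2 * e) (tmap gB phA phB (2 * e) I d b)) /\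
     (forall c, pf_obj (theta gB) (itv_thick I (2 * e)) (d + 2 * e) c ->
        exists2 b, pf_obj (theta gA) I d b & tmap gB phA phB (2 * e) I d b = c).
Proof.
move=> sA sB H he I d hok; split.
- move=> _ [x ->]; have [z0 Hz0] := sA x.
  by exists (phB z0); apply: tmap_block.
- move=> _ [y ->]; have [z0 Hz0] := sB y.
  exists (slhc_block gA I d (phA z0)); first by exists (phA z0).
  by rewrite (tmap_block _ H he hok (erefl _)) // Hz0.
Qed.

Lemma half_nat (R : realType) (A B : finType) (gA : dms R A) (gB : dms R B)
  (Z : Type) (phA : Z -> A) (phB : Z -> B) (e : R) :
  Defs.surj phA -> half_tripod gA gB phA phB e -> 0 <= e ->
  forall I d J d', obj_ok I d -> obj_ok J d' -> obj_le I d J d' ->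
     (forall b, pf_obj (theta gA) I d b ->
        pf_map (theta gB) (itv_thick I (2 * e)) (d + 2 * e) (itv_thick J (2 * e)) (d' + 2 * e)
          (tmap gB phA phB (2 * e) I d b)
        = tmap gB phA phB (2 * e) J d' (pf_map (theta gA) I d J d' b)).
Proof.
move=> sA H he I d J d' hI hJ [[H1 H2] hdd] _ [x ->].
have [z0 Hz0] := sA x.
have hI' := thick_ok (_ : 0 <= 2 * e) hI.
rewrite (tmap_block _ H he hI Hz0) // map_block //; last 3 first.
- by case: (hI' ltac:(lra)).
- by rewrite /itv_sub /=; split; lra.
- lra.
rewrite map_block //; last by case: hI.
by rewrite (tmap_block _ H he hJ Hz0).
Qed.

Lemma thick2 (R : realType) (I : R * R) (E : R) :
  itv_thick (itv_thick I E) E = itv_thick I (2 * E).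
Proof. by rewrite /itv_thick /=; congr pair; lra. Qed.

Lemma half_comp (R : realType) (A B : finType) (gA : dms R A) (gB : dms R B)
  (Z : Type) (phA : Z -> A) (phB : Z -> B) (e : R) :
  Defs.surj phA -> Defs.surj phB ->
  half_tripod gA gB phA phB e -> half_tripod gB gA phB phA e -> 0 <= e ->
  forall I d, obj_ok I d -> forall b, pf_obj (theta gA) I d b ->
     tmap gA phB phA (2 * e) (itv_thick I (2 * e)) (d + 2 * e) (tmap gB phA phB (2 * e) I d b)
     = pf_map (theta gA) I d (itv_thick I (2 * (2 * e))) (d + 2 * (2 * e)) b.
Proof.
move=> sA sB H1 H2 he I d hI _ [x ->].
have [z0 Hz0] := sA x.
have hI' := thick_ok (_ : 0 <= 2 * e) hI.
have h2 : 0 <= 2 * e by lra.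
rewrite (tmap_block _ H1 he hI Hz0) //.
rewrite (tmap_block (a := phB z0) (z0 := z0) _ H2 he (hI' h2) (erefl _)) //.
rewrite map_block; last 3 first.
- by case: hI.
- by move: hI => [hI _]; rewrite /itv_sub /=; split; lra.
- lra.
rewrite thick2 Hz0; congr slhc_block; lra.
Qed.

Lemma interleave (R : realType) (X Y : finType) (gX : dms R X) (gY : dms R Y)
  (Z : Type) (phX : Z -> X) (phY : Z -> Y) (e : R) :
  Defs.surj phX -> Defs.surj phY -> eps_tripod gX gY phX phY e -> 0 <= e ->
  surj_interleaving (theta gX) (theta gY) (2 * e).
Proof.
move=> sX sY Ht he.
have H1 : half_tripod gX gY phX phY e by move=> t z z'; case: (Ht t z z').
have H2 : half_tripod gY gX phY phX e by move=> t z z'; case: (Ht t z z').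
exists (tmap gY phX phY (2 * e)), (tmap gX phY phX (2 * e)); split.
- exact: half_obj.
- exact: half_obj.
- move=> I d J d' hI hJ hle; split; exact: half_nat.
- exact: half_comp.
- exact: half_comp.
Qed.

Local Open Scope ereal_scope.

Theorem theorem6p17 (R : realType) (X Y : finType) (gX : dms R X) (gY : dms R Y) :
  dI_sets (theta gX) (theta gY) <= 2%:E * d_dyn gX gY.
Proof.
rewrite -lee_pdivrMl //; apply: le_ereal_inf_tmp.
move=> _ [e [he [Z [phX [phY [sX sY Ht]]]]] <-].
rewrite lee_pdivrMl // -EFinM; apply: ereal_inf_lbound.
exists (2 * e)%R => //; split; first by rewrite mulr_ge0.
exact: interleave.
Qed.
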